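(* The theory $T=\mathrm{Th}(\mathbb{U})$ has the independence property if and only if there are a tuple of variables $x$ and a finite set $\Delta$ of formulas of $\mathcal{L}(\mathbb{U})$ such that $\mathrm{opD}(\{x=x\},\Delta)=\omega$.
   Context: $T$ complete, monster model $\mathbb{U}$. $\phi^1=\phi$, $\phi^0=\neg\phi$. For $0<n<\omega$, a partial type $\pi(x)$ and finite set $\Delta$ of partitioned formulas $\phi(x,y)$ of $\mathcal{L}(\mathbb{U})$: $\mathrm{opR}_n(\pi,\Delta)\ge0$ if $\pi$ consistent; limits as usual; $\mathrm{opR}_n(\pi,\Delta)\ge\alpha+1$ iff there are instances $\phi_0(x,a_0),\dots,\phi_{n-1}(x,a_{n-1})$ from $\Delta$ with $\mathrm{opR}_n(\pi\cup\{\bigwedge_{i<n}\phi_i(x,a_i)^{\sigma(i)}\},\Delta)\ge\alpha$ for all $\sigma\in 2^n$; $\infty$ means $\ge$ all ordinals. The localized op-dimension is $\mathrm{opD}(\pi,\Delta)=\sup\{0<n<\omega:\mathrm{opR}_n(\pi,\Delta)=\infty\}\le\omega$. A formula $\phi(x,y)$ has the independence property if for every $N$ there is $B\subseteq\mathbb{U}^y$, $|B|=N$, such that all $2^N$ combinations $\{\phi(x,b)^{t_b}:b\in B\}$ are consistent; $T$ has the independence property if some formula does. *)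

(* Defs.v *)
From Stdlib Require Import Arith List Classical ClassicalEpsilon.
From Stdlib Require Fin.
Import ListNotations.
Set Implicit Arguments.

Record signature := {
  fsym : Type; rsym : Type;
  farity : fsym -> nat; rarity : rsym -> nat }.

Record structure (L : signature) := {
  dom :> Type;
  fint : forall f : fsym L, (Fin.t (farity L f) -> dom) -> dom;
  rint : forall r : rsym L, (Fin.t (rarity L r) -> dom) -> Prop }.

Section Syntax.
Variable L : signature.
Variable M : Type.  (* parameters: formulas of L(M) *)

Inductive term :=
| tvar (i : nat)
| tpar (m : M)
| tapp (f : fsym L) (args : Fin.t (farity L f) -> term).

Inductive form :=
| fTop
| fEq (t1 t2 : term)
| fRel (r : rsym L) (args : Fin.t (rarity L r) -> term)
| fNeg (phi : form)
| fAnd (phi psi : form)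
| fEx (i : nat) (phi : form).

Fixpoint tfree_in (B : nat -> Prop) (t : term) : Prop :=
  match t with
  | tvar i => B i
  | tpar _ => True
  | tapp f args => forall j, tfree_in B (args j)
  end.

Fixpoint ffree_in (B : nat -> Prop) (phi : form) : Prop :=
  match phi with
  | fTop => True
  | fEq t1 t2 => tfree_in B t1 /\ tfree_in B t2
  | fRel r args => forall j, tfree_in B (args j)
  | fNeg p => ffree_in B p
  | fAnd p q => ffree_in B p /\ ffree_in B q
  | fEx i p => ffree_in (fun j => j = i \/ B j) p
  end.

Fixpoint tparams_in (P : M -> Prop) (t : term) : Prop :=
  match t with
  | tvar _ => True
  | tpar m => P m
  | tapp f args => forall j, tparams_in P (args j)
  end.

Fixpoint fparams_in (P : M -> Prop) (phi : form) : Prop :=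
  match phi with
  | fTop => True
  | fEq t1 t2 => tparams_in P t1 /\ tparams_in P t2
  | fRel r args => forall j, tparams_in P (args j)
  | fNeg p => fparams_in P p
  | fAnd p q => fparams_in P p /\ fparams_in P q
  | fEx _ p => fparams_in P p
  end.

Definition fnopar (phi : form) : Prop := fparams_in (fun _ => False) phi.

Fixpoint tsubst (s : nat -> option M) (t : term) : term :=
  match t with
  | tvar i => match s i with Some m => tpar m | None => tvar i end
  | tpar m => tpar m
  | tapp f args => tapp f (fun j => tsubst s (args j))
  end.

Fixpoint fsubst (s : nat -> option M) (phi : form) : form :=
  match phi with
  | fTop => fTop
  | fEq t1 t2 => fEq (tsubst s t1) (tsubst s t2)
  | fRel r args => fRel r (fun j => tsubst s (args j))
  | fNeg p => fNeg (fsubst s p)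
  | fAnd p q => fAnd (fsubst s p) (fsubst s q)
  | fEx i p => fEx i (fsubst (fun j => if Nat.eqb j i then None else s j) p)
  end.

Fixpoint conj_list (l : list form) : form :=
  match l with [] => fTop | p :: l' => fAnd p (conj_list l') end.

Definition signed (b : bool) (phi : form) : form := if b then phi else fNeg phi.

End Syntax.

Arguments tvar {L M}.
Arguments tpar {L M}.
Arguments fTop {L M}.

Section Semantics.
Variable L : signature.
Variable M : structure L.

Definition upd (e : nat -> M) (i : nat) (m : M) : nat -> M :=
  fun j => if Nat.eqb j i then m else e j.

Fixpoint teval (e : nat -> M) (t : term L M) : M :=
  match t with
  | tvar i => e i
  | tpar m => m
  | tapp f args => fint M f (fun j => teval e (args j))
  end.

Fixpoint sat (e : nat -> M) (phi : form L M) : Prop :=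
  match phi with
  | fTop => True
  | fEq t1 t2 => teval e t1 = teval e t2
  | fRel r args => rint M r (fun j => teval e (args j))
  | fNeg p => ~ sat e p
  | fAnd p q => sat e p /\ sat e q
  | fEx i p => exists m : M, sat (upd e i m) p
  end.

(* A partial type pi(x), x = (v_0,...,v_{k-1}), is a set of formulas of
   L(M) with free variables among v_0..v_{k-1}. *)
Definition ptype := form L M -> Prop.

(* consistency = finite satisfiability in M (consistency with the
   elementary diagram of M) *)
Definition consistent (pi : ptype) : Prop :=
  forall l : list (form L M), (forall phi, In phi l -> pi phi) ->
    exists e : nat -> M, forall phi, In phi l -> sat e phi.

Definition add (pi : ptype) (psi : form L M) : ptype :=
  fun phi => pi phi \/ phi = psi.

Definition xeqx (k : nat) : ptype :=
  fun phi => phi = conj_list (map (fun i => fEq (tvar i) (tvar i)) (seq 0 k)).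

Definition omega_saturated : Prop :=
  forall (k : nat) (A : list M) (p : ptype),
    (forall phi, p phi -> ffree_in (fun j => j < k) phi /\
                          fparams_in (fun m => In m A) phi) ->
    consistent p -> exists e : nat -> M, forall phi, p phi -> sat e phi.

(* ---------- Partitioned formulas phi(x;y) ----------
   With x of length k and y of length pf_ylen, x = v_0..v_{k-1} and
   y = v_k..v_{k+ylen-1}. *)
Record pformula := { pf_ylen : nat; pf_form : form L M }.

Definition wf_pformula (k : nat) (phi : pformula) : Prop :=
  ffree_in (fun j => j < k + pf_ylen phi) (pf_form phi).

Definition inst (k : nat) (phi : form L M) (a : list M) : form L M :=
  fsubst (fun j => if Nat.leb k j then nth_error a (j - k) else None) phi.

(* ---------- op-rank ----------
   Ordinals are represented by elements of arbitrary well-founded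
   relations; "opR_n(pi,Delta) >= w" is defined by well-founded recursion:
   pi consistent, and for every v < w there are n instances from Delta all of
   whose 2^n sign-combinations added to pi have rank >= v. *)
Definition opR_step (W : Type) (lt : W -> W -> Prop) (n k : nat)
    (Delta : list pformula) (w : W)
    (rec : forall v, lt v w -> ptype -> Prop) (pi : ptype) : Prop :=
  consistent pi /\
  forall v (H : lt v w),
    exists (f : nat -> pformula) (a : nat -> list M),
      (forall i, i < n -> In (f i) Delta /\ length (a i) = pf_ylen (f i)) /\
      forall sigma : nat -> bool,
        rec v H (add pi (conj_list (map (fun i =>
            signed (sigma i) (inst k (pf_form (f i)) (a i))) (seq 0 n)))).

Definition opR_ge (W : Type) (lt : W -> W -> Prop) (Hwf : well_founded lt)
    (n k : nat) (Delta : list pformula) : W -> ptype -> Prop :=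
  Fix Hwf (fun _ => ptype -> Prop) (fun w rec => opR_step lt n k Delta w rec).

Definition opR_inf (n k : nat) (Delta : list pformula) (pi : ptype) : Prop :=
  forall (W : Type) (lt : W -> W -> Prop) (Hwf : well_founded lt) (w : W),
    opR_ge Hwf n k Delta w pi.

End Semantics.

Inductive natw := fin (n : nat) | omega.

Definition nat_bounded (S : nat -> Prop) : Prop := exists b, forall n, S n -> n <= b.
Definition nat_is_lub (S : nat -> Prop) (b : nat) : Prop :=
  (forall n, S n -> n <= b) /\ (forall c, (forall n, S n -> n <= c) -> b <= c).

(* supremum in omega+1 of a set of naturals (sup of the empty set is 0) *)
Definition sup_natw (S : nat -> Prop) : natw :=
  match excluded_middle_informative (nat_bounded S) with
  | left _ => fin (epsilon (inhabits 0) (nat_is_lub S))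
  | right _ => omega
  end.

Definition opD (L : signature) (M : structure L) (k : nat)
    (pi : ptype M) (Delta : list (pformula M)) : natw :=
  sup_natw (fun n => 0 < n /\ opR_inf n k Delta pi).

Definition formula_IP (L : signature) (M : structure L) (k l : nat)
    (phi : form L M) : Prop :=
  forall N : nat, exists B : list (list M),
    NoDup B /\ length B = N /\ (forall b, In b B -> length b = l) /\
    forall t : list M -> bool,
      consistent (fun psi => exists b, In b B /\
                    psi = signed (t b) (@inst L M k phi b)).

Definition has_IP (L : signature) (M : structure L) : Prop :=
  exists (k l : nat) (phi : form L M),
    ffree_in (fun j => j < k + l) phi /\ fnopar phi /\ formula_IP M k l phi.

(* Main.v *)
Require Import Defs.
From Stdlib Require Import Bool List Arith Lia Classical ClassicalEpsilon FunctionalExtensionality.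
From Stdlib Require Fin.
Import ListNotations.
Set Implicit Arguments.

Section Basic.
Variable L : signature.
Variable M : structure L.

Definition sube (s : nat -> option M) (e : nat -> M) : nat -> M :=
  fun j => match s j with Some m => m | None => e j end.

Lemma teval_subst (e : nat -> M) s (t : term L M) :
  teval M e (tsubst s t) = teval M (sube s e) t.
Proof.
  induction t; simpl.
  - unfold sube. destruct (s i); reflexivity.
  - reflexivity.
  - f_equal. apply functional_extensionality. intro j. apply H.
Qed.

Lemma sat_subst (p : form L M) : forall (e : nat -> M) s,
  sat M e (fsubst s p) <-> sat M (sube s e) p.
Proof.
  induction p; intros e s; simpl.
  - tauto.
  - rewrite !teval_subst. tauto.
  - replace (fun j => teval M e (tsubst s (args j))) with (fun j => teval M (sube s e) (args j)).
    tauto. apply functional_extensionality; intro j; rewrite teval_subst; auto.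
  - rewrite IHp. tauto.
  - rewrite IHp1, IHp2. tauto.
  - split; intros [m Hm]; exists m.
    + apply IHp in Hm.
      replace (upd M (sube s e) i m) with
        (sube (fun j => if Nat.eqb j i then None else s j) (upd M e i m)); auto.
      apply functional_extensionality; intro j. unfold sube, upd.
      destruct (Nat.eqb j i); auto.
    + apply IHp.
      replace (sube (fun j => if Nat.eqb j i then None else s j) (upd M e i m))
        with (upd M (sube s e) i m); auto.
      apply functional_extensionality; intro j. unfold sube, upd.
      destruct (Nat.eqb j i); auto.
Qed.

Lemma teval_free (B : nat -> Prop) (t : term L M) (e e' : nat -> M) :
  tfree_in B t -> (forall j, B j -> e j = e' j) -> teval M e t = teval M e' t.
Proof.
  induction t; simpl; intros Hf Ha; auto.
  f_equal. apply functional_extensionality. intro j. apply H; auto.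
Qed.

Lemma sat_free (p : form L M) : forall (B : nat -> Prop) (e e' : nat -> M),
  ffree_in B p -> (forall j, B j -> e j = e' j) -> (sat M e p <-> sat M e' p).
Proof.
  induction p; intros B e e' Hf Ha; simpl in *.
  - tauto.
  - destruct Hf. rewrite (teval_free _ _ e e' H Ha), (teval_free _ _ e e' H0 Ha). tauto.
  - replace (fun j => teval M e (args j)) with (fun j => teval M e' (args j)). tauto.
    apply functional_extensionality; intro j. symmetry. eapply teval_free; eauto.
  - rewrite (IHp B e e'); tauto.
  - destruct Hf. rewrite (IHp1 B e e'), (IHp2 B e e'); tauto.
  - assert (Hag : forall m, forall j, (j = i \/ B j) -> upd M e i m j = upd M e' i m j).
    { intros m j [->|Hj]; unfold upd; destruct (Nat.eqb _ _) eqn:E; auto.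
      apply Nat.eqb_neq in E; congruence. }
    split; intros [m Hm]; exists m.
    + apply (IHp (fun j => j = i \/ B j) (upd M e i m) (upd M e' i m) Hf (Hag m)); auto.
    + apply (IHp (fun j => j = i \/ B j) (upd M e i m) (upd M e' i m) Hf (Hag m)); auto.
Qed.

Lemma tfree_mono (B B' : nat -> Prop) (t : term L M) :
  tfree_in B t -> (forall j, B j -> B' j) -> tfree_in B' t.
Proof. induction t; simpl; auto. Qed.

Lemma ffree_mono (p : form L M) : forall (B B' : nat -> Prop),
  ffree_in B p -> (forall j, B j -> B' j) -> ffree_in B' p.
Proof.
  induction p; intros B B' Hf Hm; simpl in *.
  - auto.
  - destruct Hf; split; eapply tfree_mono; eauto.
  - intro j; eapply tfree_mono; eauto.
  - eauto.
  - destruct Hf; split; eauto.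
  - eapply IHp; eauto. intros j [H|H]; auto.
Qed.

Lemma tparams_mono (P P' : M -> Prop) (t : term L M) :
  tparams_in P t -> (forall m, P m -> P' m) -> tparams_in P' t.
Proof. induction t; simpl; auto. Qed.

Lemma fparams_mono (p : form L M) : forall (P P' : M -> Prop),
  fparams_in P p -> (forall m, P m -> P' m) -> fparams_in P' p.
Proof.
  induction p; intros B B' Hf Hm; simpl in *.
  - auto.
  - destruct Hf; split; eapply tparams_mono; eauto.
  - intro j; eapply tparams_mono; eauto.
  - eauto.
  - destruct Hf; split; eauto.
  - eauto.
Qed.

Lemma sat_conj (e : nat -> M) (l : list (form L M)) :
  sat M e (conj_list l) <-> forall p, In p l -> sat M e p.
Proof.
  induction l; simpl.
  - split; auto. intros _ p [].
  - rewrite IHl. split.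
    + intros [H1 H2] p [<-|H]; auto.
    + intros H; split; auto.
Qed.

Lemma sat_signed (e : nat -> M) b (p : form L M) :
  sat M e (signed b p) <-> (sat M e p <-> b = true).
Proof. destruct b; simpl; split; intuition; discriminate. Qed.

Lemma ffree_conj (B : nat -> Prop) (l : list (form L M)) :
  (forall p, In p l -> ffree_in B p) -> ffree_in B (conj_list l).
Proof. induction l; simpl; auto. Qed.

Lemma fparams_conj (B : M -> Prop) (l : list (form L M)) :
  (forall p, In p l -> fparams_in B p) -> fparams_in B (conj_list l).
Proof. induction l; simpl; auto. Qed.

Lemma ffree_signed B b (p : form L M) : ffree_in B p -> ffree_in B (signed b p).
Proof. destruct b; simpl; auto. Qed.
Lemma fparams_signed B b (p : form L M) : fparams_in B p -> fparams_in B (signed b p).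
Proof. destruct b; simpl; auto. Qed.

End Basic.


Ltac bdestr := repeat match goal with
  | |- context [Nat.leb ?a ?b] => destruct (Nat.leb_spec a b)
  | |- context [Nat.ltb ?a ?b] => destruct (Nat.ltb_spec a b)
  | |- context [Nat.eqb ?a ?b] => destruct (Nat.eqb_spec a b)
  end; simpl.

Section Blocks.
Variable L : signature.
Variable M : structure L.

Definition over (e : nat -> M) (base len : nat) (g : nat -> M) : nat -> M :=
  fun j => if (base <=? j) && (j <? base + len) then g (j - base) else e j.

Fixpoint exblock (base len : nat) (p : form L M) : form L M :=
  match len with
  | 0 => p
  | S n => fEx base (exblock (S base) n p)
  end.

Lemma sat_exblock len : forall base (e : nat -> M) p,
  sat M e (exblock base len p) <-> exists g, sat M (over e base len g) p.
Proof.
  induction len; intros base e p; simpl.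
  - assert (forall g, over e base 0 g = e).
    { intro g; apply functional_extensionality; intro j; unfold over; bdestr; auto; lia. }
    split.
    + intro H0. exists (fun _ => e 0). rewrite H. auto.
    + intros [g Hg]. rewrite H in Hg. auto.
  - split.
    + intros [m Hm]. apply IHlen in Hm. destruct Hm as [g Hg].
      exists (fun i => match i with 0 => m | S i' => g i' end).
      replace (over e base (S len) (fun i => match i with 0 => m | S i' => g i' end))
        with (over (upd M e base m) (S base) len g); auto.
      apply functional_extensionality; intro j; unfold over, upd; bdestr; auto; try lia.
      * replace (j - base) with (S (j - S base)) by lia. auto.
      * subst. replace (base - base) with 0 by lia. auto.
    + intros [G HG]. exists (G 0). apply IHlen. exists (fun i => G (S i)).
      replace (over (upd M e base (G 0)) (S base) len (fun i => G (S i))) with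
        (over e base (S len) G); auto.
      apply functional_extensionality; intro j; unfold over, upd; bdestr; auto; try lia.
      * replace (j - base) with (S (j - S base)) by lia. auto.
      * subst. replace (base - base) with 0 by lia. auto.
Qed.

Lemma ffree_exblock len : forall base (B : nat -> Prop) (p : form L M),
  ffree_in (fun q => (base <= q < base + len) \/ B q) p -> ffree_in B (exblock base len p).
Proof.
  induction len; intros base B p H; simpl.
  - eapply ffree_mono; eauto. intros j [Hj|Hj]; auto; lia.
  - apply IHlen. eapply ffree_mono; eauto. intros j [Hj|Hj]; auto.
    destruct (Nat.eq_dec j base); auto. left; lia.
Qed.

Lemma fparams_exblock len : forall base (P : M -> Prop) (p : form L M),
  fparams_in P p -> fparams_in P (exblock base len p).
Proof. induction len; simpl; auto. Qed.

End Blocks.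

Fixpoint pats (R : nat) : list (nat -> bool) :=
  match R with
  | 0 => [fun _ => true]
  | S R' => flat_map (fun p => [fun i => if i =? R' then true else p i;
                               fun i => if i =? R' then false else p i]) (pats R')
  end.

Lemma pats_cover R : forall t : nat -> bool, exists p, In p (pats R) /\ forall i, i < R -> p i = t i.
Proof.
  induction R; intro t; simpl.
  - exists (fun _ => true); split; auto. intros; lia.
  - destruct (IHR t) as [p [Hp Ht]].
    exists (fun i => if i =? R then t R else p i). split.
    + apply in_flat_map. exists p. split; auto. destruct (t R); simpl; auto.
    + intros i Hi. destruct (Nat.eqb_spec i R); subst; auto. apply Ht; lia.
Qed.


Section Fwd.
Variable L : signature.
Variable M : structure L.
Variable d : M.
Variables k l : nat.
Variable phi : form L M.
Hypothesis Hfree : ffree_in (fun j => j < k + l) phi.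
Hypothesis Hnp : fparams_in (fun _ => False) phi.

Definition mix (x b : nat -> M) : nat -> M := fun j => if j <? k then x j else b (j - k).
Definition Phi (x b : nat -> M) : Prop := sat M (mix x b) phi.

Lemma Phi_cong x x' b b' : (forall j, j < k -> x j = x' j) -> (forall j, j < l -> b j = b' j) ->
  (Phi x b <-> Phi x' b').
Proof.
  intros Hx Hb. unfold Phi. eapply sat_free; [exact Hfree|].
  intros j Hj; cbv beta in Hj. unfold mix. bdestr; auto. apply Hb; lia.
Qed.

Lemma inst_Phi (e : nat -> M) bl : length bl = l ->
  (sat M e (inst M k phi bl) <-> Phi e (fun j => nth j bl d)).
Proof.
  intro Hl. unfold inst, Phi. rewrite sat_subst. eapply sat_free; [exact Hfree|].
  intros j Hj; cbv beta in Hj. unfold sube, mix. bdestr; try lia; auto.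
  rewrite nth_error_nth' with (d := d) by lia. auto.
Qed.

Definition Indep (R : nat) (cs : nat -> nat -> M) : Prop :=
  forall t : nat -> bool, exists x, forall i, i < R -> (Phi x (cs i) <-> t i = true).

Lemma Indep_mono R R' cs : R <= R' -> Indep R' cs -> Indep R cs.
Proof. intros H HI t. destruct (HI t) as [x Hx]. exists x. intros; apply Hx; lia. Qed.

Lemma Indep_ext R cs cs' : (forall i j, i < R -> j < l -> cs i j = cs' i j) ->
  Indep R cs -> Indep R cs'.
Proof.
  intros H HI t. destruct (HI t) as [x Hx]. exists x. intros i Hi.
  rewrite <- (Hx i Hi). apply Phi_cong; auto. intros; symmetry; auto.
Qed.

Section Rank.
Variable bs : nat -> nat -> M.
Hypothesis Hbs : forall m, Indep m bs.

Definition Inv (pi : ptype M) : Prop :=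
  exists m (s : nat -> bool), forall psi, pi psi -> forall x : nat -> M,
    (forall j, j < m -> (Phi x (bs j) <-> s j = true)) -> sat M x psi.

Lemma Inv_consistent pi : Inv pi -> consistent pi.
Proof.
  intros [m [s Hs]] lst Hl. destruct (Hbs m s) as [x Hx].
  exists x. intros p Hp. apply (Hs p (Hl p Hp) x Hx).
Qed.

Lemma opR_ge_unfold (W : Type) (lt : W -> W -> Prop) (Hwf : well_founded lt) n k' (Delta : list (pformula M)) w (pi : ptype M) :
  opR_ge Hwf n k' Delta w pi <->
  opR_step lt n k' Delta w (fun v _ => opR_ge Hwf n k' Delta v) pi.
Proof.
  unfold opR_ge at 1. rewrite Fix_eq. reflexivity.
  intros x f g H. assert (f = g) as ->; auto.
  apply functional_extensionality_dep; intro y. apply functional_extensionality_dep; intro p. auto.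
Qed.

Definition Dl : list (pformula M) := [Build_pformula M l phi].

Lemma nth_map_seq (f : nat -> M) j : j < l -> nth j (map f (seq 0 l)) d = f j.
Proof.
  intro Hj. rewrite nth_indep with (d' := f 0) by (rewrite length_map, length_seq; lia).
  rewrite map_nth, seq_nth by lia. auto.
Qed.

Lemma Inv_rank n (W : Type) (lt : W -> W -> Prop) (Hwf : well_founded lt) :
  forall w pi, Inv pi -> opR_ge Hwf n k Dl w pi.
Proof.
  intro w. induction w as [w IH] using (well_founded_ind Hwf).
  intros pi HI. apply opR_ge_unfold. split; [apply Inv_consistent; auto|].
  intros v Hv. destruct HI as [m [s Hs]].
  exists (fun _ => Build_pformula M l phi), (fun i => map (bs (m + i)) (seq 0 l)).
  split.
  - intros i Hi. split; [left; auto|]. simpl. rewrite length_map, length_seq; auto.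
  - intro sigma. apply IH; auto.
    exists (m + n), (fun j => if j <? m then s j else sigma (j - m)).
    intros psi [Hpsi | ->] x Hx.
    + apply (Hs psi Hpsi x). intros j Hj. rewrite Hx by lia. bdestr; try tauto; lia.
    + apply sat_conj. intros p Hp. apply in_map_iff in Hp. destruct Hp as [i [<- Hi]].
      apply in_seq in Hi. apply sat_signed. simpl.
      rewrite inst_Phi by (rewrite length_map, length_seq; auto).
      specialize (Hx (m + i) ltac:(lia)).
      replace (if m + i <? m then s (m + i) else sigma (m + i - m)) with (sigma i) in Hx
        by (bdestr; try lia; f_equal; lia).
      rewrite <- Hx. apply Phi_cong; auto. intros j Hj. apply nth_map_seq; auto.
Qed.

Lemma xeqx_Inv : Inv (xeqx M k).
Proof.
  exists 0, (fun _ => true). intros psi Hpsi x _. unfold xeqx in Hpsi. subst.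
  apply sat_conj. intros p Hp. apply in_map_iff in Hp. destruct Hp as [i [<- _]]. simpl. auto.
Qed.

Lemma fwd_opD : opD k (xeqx M k) Dl = omega.
Proof.
  unfold opD, sup_natw.
  destruct (excluded_middle_informative _) as [[b Hb]|]; auto.
  exfalso. assert (S b <= b); [|lia]. apply Hb. split; [lia|].
  intros W lt Hwf w. apply Inv_rank. apply xeqx_Inv.
Qed.

End Rank.

Lemma Phi_over e g : sat M (over M e k l g) phi <-> Phi e g.
Proof.
  unfold Phi. eapply sat_free; [exact Hfree|].
  intros j Hj; cbv beta in Hj. unfold over, mix. bdestr; auto; try lia.
Qed.

Section Theta.
Variable r : nat.
Variable c : nat -> nat -> M.

Definition src (i j : nat) : term L M :=
  if i <? r then tpar (c i j) else if i =? r then tvar (k + l + j)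
  else tvar (k + l + l + (i - r - 1) * l + j).

Definition PhiT (ts : nat -> term L M) : form L M :=
  exblock M k l (fAnd (conj_list (map (fun j => fEq (tvar (k + j)) (ts j)) (seq 0 l))) phi).

Lemma sat_PhiT (ts : nat -> term L M) e :
  (forall j, j < l -> forall e e' : nat -> M, (forall q, k + l <= q -> e q = e' q) ->
     teval M e (ts j) = teval M e' (ts j)) ->
  (sat M e (PhiT ts) <-> Phi e (fun j => teval M e (ts j))).
Proof.
  intro Hts. unfold PhiT. rewrite sat_exblock. simpl. split.
  - intros [g [Heq Hphi]]. rewrite sat_conj in Heq.
    assert (Hg : forall j, j < l -> g j = teval M e (ts j)).
    { intros j Hj.
      assert (H1 : teval M (over M e k l g) (ts j) = teval M e (ts j)).
      { apply Hts; auto. intros q Hq; unfold over; bdestr; auto; lia. }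
      rewrite <- H1.
      specialize (Heq (fEq (tvar (k+j)) (ts j))). simpl in Heq. rewrite <- Heq.
      + unfold over; bdestr; try lia. f_equal; lia.
      + apply in_map_iff; exists j; split; auto; apply in_seq; lia. }
    apply Phi_over in Hphi. revert Hphi. apply Phi_cong; auto. intros j Hj; symmetry; auto.
  - intro H. exists (fun j => teval M e (ts j)). split.
    + apply sat_conj. intros p Hp. apply in_map_iff in Hp. destruct Hp as [j [<- Hj]].
      apply in_seq in Hj. simpl.
      transitivity (teval M e (ts j)).
      * unfold over; bdestr; try lia. replace (k + j - k) with j by lia; reflexivity.
      * apply Hts; [lia|]. intros q Hq; unfold over; bdestr; auto; lia.
    + apply Phi_over. auto.
Qed.

Lemma src_ok i j : forall e e' : nat -> M, (forall q, k + l <= q -> e q = e' q) ->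
     teval M e (src i j) = teval M e' (src i j).
Proof. intros e e' H. unfold src. bdestr; auto; apply H; lia. Qed.

Lemma src_over0 i j e1 gx : teval M (over M e1 0 k gx) (src i j) = teval M e1 (src i j).
Proof. apply src_ok. intros q Hq. unfold over; bdestr; auto; lia. Qed.

Definition Cp (N : nat) (p : nat -> bool) : form L M :=
  exblock M 0 k (conj_list (map (fun i => signed (p i) (PhiT (src i))) (seq 0 (r + 1 + N)))).

Lemma sat_Cp N p e1 : sat M e1 (Cp N p) <->
  exists x, forall i, i < r + 1 + N -> (Phi x (fun j => teval M e1 (src i j)) <-> p i = true).
Proof.
  unfold Cp. rewrite sat_exblock.
  assert (Hkey : forall gx i, sat M (over M e1 0 k gx) (PhiT (src i)) <->
                               Phi gx (fun j => teval M e1 (src i j))).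
  { intros gx i. rewrite sat_PhiT by (intros; apply src_ok; auto).
    apply Phi_cong.
    - intros j Hj. unfold over; bdestr; try lia. f_equal; lia.
    - intros j Hj. apply src_over0. }
  split.
  - intros [gx Hgx]. exists gx. intros i Hi. rewrite sat_conj in Hgx.
    rewrite <- Hkey. apply sat_signed. apply Hgx.
    apply in_map_iff. exists i. split; auto. apply in_seq. lia.
  - intros [x Hx]. exists x. apply sat_conj. intros q Hq.
    apply in_map_iff in Hq. destruct Hq as [i [<- Hi]]. apply in_seq in Hi.
    apply sat_signed. rewrite Hkey. apply Hx. lia.
Qed.

Definition Body (N : nat) : form L M := conj_list (map (Cp N) (pats (r + 1 + N))).

Lemma sat_Body N e1 : sat M e1 (Body N) <-> Indep (r + 1 + N) (fun i j => teval M e1 (src i j)).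
Proof.
  unfold Body. rewrite sat_conj. split.
  - intros H t. destruct (pats_cover (r + 1 + N) t) as [p [Hp Hpt]].
    assert (Hc : sat M e1 (Cp N p)) by (apply H; apply in_map; auto).
    apply sat_Cp in Hc. destruct Hc as [x Hx]. exists x. intros i Hi.
    rewrite Hx by auto. rewrite Hpt by auto. tauto.
  - intros HI q Hq. apply in_map_iff in Hq. destruct Hq as [p [<- Hp]].
    apply sat_Cp. apply HI.
Qed.

Definition theta (N : nat) : form L M := exblock M (k + l + l) (N * l) (Body N).

Definition full (y : nat -> M) (ds : nat -> nat -> M) (i : nat) : nat -> M :=
  if i <? r then c i else if i =? r then y else ds (i - r - 1).

Lemma sat_theta N e : sat M e (theta N) <->
  exists ds, Indep (r + 1 + N) (full (fun j => e (k + l + j)) ds).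
Proof.
  unfold theta. rewrite sat_exblock. split.
  - intros [g Hg]. apply sat_Body in Hg.
    exists (fun i j => g (i * l + j)). revert Hg. apply Indep_ext.
    intros i j Hi Hj. unfold src, full. bdestr; auto.
    + unfold over; bdestr; auto; lia.
    + unfold over; bdestr; try nia. f_equal. lia.
  - intros [ds Hds]. exists (fun q => ds (q / l) (q mod l)). apply sat_Body.
    revert Hds. apply Indep_ext.
    intros i j Hi Hj. unfold src, full. bdestr; auto.
    + unfold over; bdestr; auto; lia.
    + unfold over; bdestr; try nia.
      replace (k + l + l + (i - r - 1) * l + j - (k + l + l)) with ((i - r - 1) * l + j) by lia.
      rewrite Nat.div_add_l by lia. rewrite Nat.div_small by lia.
      replace ((i - r - 1) * l + j) with (j + (i - r - 1) * l) by lia. rewrite Nat.Div0.mod_add, Nat.mod_small by lia. rewrite Nat.add_0_r. reflexivity.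
Qed.

Definition parlist : list M := flat_map (fun i => map (c i) (seq 0 l)) (seq 0 r).

Lemma theta_syntax N : ffree_in (fun q => q < k + l + l) (theta N) /\
                       fparams_in (fun m => In m parlist) (theta N).
Proof.
  split.
  - unfold theta. apply ffree_exblock. unfold Body.
    apply ffree_mono with (B := fun q => q < k + l + l + N * l);
      [|intros q Hq; cbv beta in *; lia].
    apply ffree_conj. intros p Hp. apply in_map_iff in Hp. destruct Hp as [pp [<- _]].
    unfold Cp. apply ffree_exblock. apply ffree_conj. intros p Hp.
    apply in_map_iff in Hp. destruct Hp as [i [<- Hi]]. apply in_seq in Hi.
    apply ffree_signed. unfold PhiT. apply ffree_exblock. simpl. split.
    + apply ffree_conj. intros p Hp. apply in_map_iff in Hp. destruct Hp as [j [<- Hj]].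
      apply in_seq in Hj. simpl. split; [lia|].
      unfold src. bdestr; simpl; auto; nia.
    + eapply ffree_mono; [exact Hfree|]. intros q Hq; cbv beta in *; lia.
  - unfold theta. apply fparams_exblock. unfold Body. apply fparams_conj.
    intros p Hp. apply in_map_iff in Hp. destruct Hp as [pp [<- _]].
    unfold Cp. apply fparams_exblock. apply fparams_conj. intros p Hp.
    apply in_map_iff in Hp. destruct Hp as [i [<- Hi]]. apply in_seq in Hi.
    apply fparams_signed. unfold PhiT. apply fparams_exblock. simpl. split.
    + apply fparams_conj. intros p Hp. apply in_map_iff in Hp. destruct Hp as [j [<- Hj]].
      apply in_seq in Hj. simpl. split; auto.
      unfold src. bdestr; simpl; auto.
      unfold parlist. apply in_flat_map. exists i. split; [apply in_seq; lia|].
      apply in_map. apply in_seq. lia.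
    + eapply fparams_mono; [exact Hnp|]. intros _ [].
Qed.

End Theta.

Definition app_t (r : nat) (c ds : nat -> nat -> M) (i : nat) : nat -> M :=
  if i <? r then c i else ds (i - r).

Definition Good (r : nat) (c : nat -> nat -> M) : Prop :=
  forall N, exists ds, Indep (r + N) (app_t r c ds).

Lemma bound_list (lst : list (form L M)) (P : nat -> form L M) :
  (forall p, In p lst -> exists N, p = P N) ->
  exists Nb, forall p, In p lst -> exists N, N <= Nb /\ p = P N.
Proof.
  induction lst; intro H.
  - exists 0. intros p [].
  - destruct IHlst as [Nb HNb]. { intros p Hp; apply H; right; auto. }
    destruct (H a (or_introl eq_refl)) as [Na Ha].
    exists (Nb + Na). intros p [<-|Hp].
    + exists Na; split; auto; lia.
    + destruct (HNb p Hp) as [N [HN ->]]. exists N; split; auto; lia.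
Qed.

Lemma Good_step (Hsat : omega_saturated M) r c : Good r c -> exists b, Good (S r) (app_t r c (fun _ => b)).
Proof.
  intro HG.
  destruct (Hsat (k + l + l) (parlist r c) (fun psi => exists N, psi = theta r c N)) as [e He].
  - intros psi [N ->]. apply theta_syntax.
  - intros lst Hl. destruct (bound_list lst (theta r c) Hl) as [Nb HNb].
    destruct (HG (S Nb)) as [ds Hds].
    exists (fun q => if k + l <=? q then ds 0 (q - (k + l)) else d).
    intros p Hp. destruct (HNb p Hp) as [N [HN ->]].
    apply sat_theta. exists (fun i => ds (S i)).
    apply Indep_mono with (R' := r + S Nb); [lia|].
    revert Hds. apply Indep_ext. intros i j Hi Hj. unfold app_t, full. cbv beta. bdestr; auto; try lia.
    + subst. replace (r - r) with 0 by lia. replace (k + l + j - (k + l)) with j by lia. auto.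
    + f_equal; lia.
  - exists (fun j => e (k + l + j)). intro N.
    destruct (proj1 (sat_theta r c N e) (He _ (ex_intro _ N eq_refl))) as [ds Hds].
    exists ds. replace (S r + N) with (r + 1 + N) by lia. revert Hds. apply Indep_ext.
    intros i j Hi Hj. unfold app_t, full. bdestr; auto; try lia. f_equal; lia.
Qed.

Lemma Good0 c : formula_IP M k l phi -> Good 0 c.
Proof.
  intros HIP N. destruct (HIP N) as [B [HND [HlenB [Hlens Hcons]]]].
  exists (fun i j => nth j (nth i B []) d).
  intro t.
  set (t' := fun b : list M => if excluded_middle_informative
                 (exists i, i < N /\ nth i B [] = b /\ t i = true) then true else false).
  destruct (Hcons t' (map (fun b => signed (t' b) (inst M k phi b)) B)) as [e He].
  - intros p Hp. apply in_map_iff in Hp. destruct Hp as [b [<- Hb]]. exists b; auto.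
  - exists e. intros i Hi. simpl in Hi.
    assert (HiB : In (nth i B []) B) by (apply nth_In; lia).
    specialize (He _ (in_map (fun b => signed (t' b) (inst M k phi b)) _ _ HiB)).
    apply sat_signed in He. rewrite inst_Phi in He by auto.
    unfold app_t. bdestr; try lia. replace (i - 0) with i by lia.
    rewrite He. unfold t'. destruct (excluded_middle_informative _) as [[i' [Hi' [Heq Ht]]]|Hn].
    + split; auto. intros _. assert (i' = i) as <-; auto.
      apply (proj1 (NoDup_nth B []) HND); auto; lia.
    + split; [discriminate|]. intro Ht. exfalso; apply Hn. exists i; auto.
Qed.

Definition next (r : nat) (c : nat -> nat -> M) : nat -> M :=
  epsilon (inhabits (fun _ : nat => d)) (fun b => Good (S r) (app_t r c (fun _ => b))).

Fixpoint seqc (m : nat) : nat -> nat -> M :=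
  match m with
  | 0 => fun _ _ => d
  | S m' => app_t m' (seqc m') (fun _ => next m' (seqc m'))
  end.

Lemma seqc_good (Hsat : omega_saturated M) (HIP : formula_IP M k l phi) m : Good m (seqc m).
Proof.
  induction m.
  - apply Good0; auto.
  - simpl. unfold next.
    apply (epsilon_spec (inhabits (fun _ : nat => d))
             (fun b => Good (S m) (app_t m (seqc m) (fun _ => b)))).
    apply Good_step; auto.
Qed.

Definition bsq (j : nat) := seqc (S j) j.

Lemma seqc_bs m i : i < m -> seqc m i = bsq i.
Proof.
  induction m; intros Hi; [lia|]. simpl. unfold app_t at 1. bdestr.
  - apply IHm; auto.
  - assert (i = m) by lia. subst. unfold bsq. simpl. unfold app_t. bdestr; try lia. auto.
Qed.

Lemma Indep_bsq (Hsat : omega_saturated M) (HIP : formula_IP M k l phi) m : Indep m bsq.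
Proof.
  destruct (seqc_good Hsat HIP m 0) as [ds H]. rewrite Nat.add_0_r in H.
  revert H. apply Indep_ext. intros i j Hi Hj. unfold app_t. bdestr; try lia.
  rewrite seqc_bs; auto.
Qed.

Lemma fwd_main (Hsat : omega_saturated M) : formula_IP M k l phi ->
  exists (k0 : nat) (Delta : list (pformula M)),
    (forall p, In p Delta -> wf_pformula k0 p) /\ opD k0 (xeqx M k0) Delta = omega.
Proof.
  intro HIP. exists k, Dl. split.
  - intros p [<-|[]]. unfold wf_pformula. simpl. exact Hfree.
  - apply fwd_opD with (bs := bsq). intro m. apply Indep_bsq; auto.
Qed.

End Fwd.


Lemma NoDup_firstn' (A : Type) n (l : list A) : NoDup l -> NoDup (firstn n l).
Proof. intro H. rewrite <- (firstn_skipn n l) in H. eapply NoDup_app_remove_r; eauto. Qed.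

Lemma In_firstn' (A : Type) n (l : list A) x : In x (firstn n l) -> In x l.
Proof. intro H. rewrite <- (firstn_skipn n l). apply in_or_app; auto. Qed.

Definition bdec (P : Prop) : bool := if excluded_middle_informative P then true else false.
Lemma bdec_true P : bdec P = true <-> P.
Proof. unfold bdec; destruct (excluded_middle_informative P); split; auto; discriminate. Qed.

Lemma pig (X : Type) (g : nat -> X) N (Delta : list X) : forall (I : list nat),
  NoDup I -> (forall i, In i I -> In (g i) Delta) -> length Delta * N < length I ->
  exists psi J, In psi Delta /\ length J = N /\ NoDup J /\ forall i, In i J -> In i I /\ g i = psi.
Proof.
  induction Delta as [|psi0 rest IH]; intros I HND Hin Hlen.
  - destruct I as [|i I]; simpl in Hlen; [lia|]. destruct (Hin i (or_introl eq_refl)).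
  - set (I0 := filter (fun i => bdec (g i = psi0)) I).
    set (I1 := filter (fun i => negb (bdec (g i = psi0))) I).
    assert (HL : length I0 + length I1 = length I) by apply filter_length.
    destruct (le_lt_dec N (length I0)) as [HN|HN].
    + exists psi0, (firstn N I0). split; [left; auto|]. split.
      { rewrite length_firstn. lia. }
      split. { apply NoDup_firstn', NoDup_filter; auto. }
      intros i Hi. apply In_firstn' in Hi. apply filter_In in Hi. destruct Hi as [Hi Hg].
      rewrite bdec_true in Hg. auto.
    + destruct (IH I1) as [psi [J [H1 [H2 [H3 H4]]]]].
      * apply NoDup_filter; auto.
      * intros i Hi. apply filter_In in Hi. destruct Hi as [Hi Hg].
        destruct (Hin i Hi) as [Heq|Hr]; auto.
        exfalso. rewrite negb_true_iff in Hg.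
        assert (bdec (g i = psi0) = true) by (apply bdec_true; auto). congruence.
      * simpl in Hlen. lia.
      * exists psi, J. split; [right; auto|]. split; auto. split; auto.
        intros i Hi. destruct (H4 i Hi) as [Hi1 Hg]. apply filter_In in Hi1. tauto.
Qed.

Lemma inf_pig (X : Type) (Fam : X -> nat -> Prop) (Delta : list X) :
  (forall psi N N', N' <= N -> Fam psi N -> Fam psi N') ->
  (forall N, exists psi, In psi Delta /\ Fam psi N) ->
  exists psi, In psi Delta /\ forall N, Fam psi N.
Proof.
  intro Hmono. induction Delta as [|psi0 rest IH]; intro H.
  - destruct (H 0) as [psi [[] _]].
  - destruct (classic (forall N, Fam psi0 N)) as [Hall|Hn].
    + exists psi0; split; [left|]; auto.
    + apply not_all_ex_not in Hn. destruct Hn as [N0 HN0].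
      destruct IH as [psi [Hpsi HF]].
      * intro N. destruct (H (N + N0)) as [psi [[<-|Hpsi] HF]].
        -- exfalso. apply HN0. eapply Hmono; [|exact HF]. lia.
        -- exists psi. split; auto. eapply Hmono; [|exact HF]. lia.
      * exists psi. split; [right|]; auto.
Qed.

Section Bwd.
Variable L : signature.
Variable M : structure L.
Variable k : nat.

Definition Fam (psi : pformula M) (N : nat) : Prop :=
  exists B : list (list M), NoDup B /\ length B = N /\
    (forall b, In b B -> length b = pf_ylen psi) /\
    forall t : list M -> bool, exists e : nat -> M,
      forall b, In b B -> sat M e (signed (t b) (inst M k (pf_form psi) b)).

Lemma Fam_mono psi N N' : N' <= N -> Fam psi N -> Fam psi N'.
Proof.
  intros HN [B [H1 [H2 [H3 H4]]]]. exists (firstn N' B). split; [apply NoDup_firstn'; auto|].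
  split; [rewrite length_firstn; lia|]. split.
  - intros b Hb. apply H3. eapply In_firstn'; eauto.
  - intro t. destruct (H4 t) as [e He]. exists e. intros b Hb. apply He. eapply In_firstn'; eauto.
Qed.

Lemma opD_unbounded (Delta : list (pformula M)) :
  opD k (xeqx M k) Delta = omega ->
  forall b, exists n, b < n /\ opR_inf n k Delta (xeqx M k).
Proof.
  unfold opD, sup_natw. destruct (excluded_middle_informative _) as [_|Hnb]; [discriminate|].
  intros _ b. apply NNPP. intro Hno. apply Hnb. exists b. intros n [Hn Hr].
  destruct (le_lt_dec n b); auto. exfalso. apply Hno. exists n. auto.
Qed.

Lemma opR_inf_inst n (Delta : list (pformula M)) pi : opR_inf n k Delta pi ->
  exists (f : nat -> pformula M) (a : nat -> list M),
    (forall i, i < n -> In (f i) Delta /\ length (a i) = pf_ylen (f i)) /\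
    forall sigma : nat -> bool, exists e : nat -> M, forall i, i < n ->
      sat M e (signed (sigma i) (inst M k (pf_form (f i)) (a i))).
Proof.
  intro H. specialize (H nat lt lt_wf 1). apply opR_ge_unfold in H.
  destruct H as [_ H]. destruct (H 0 (Nat.lt_0_1)) as [f [a [Hfa Hs]]].
  exists f, a. split; auto. intro sigma. specialize (Hs sigma).
  apply opR_ge_unfold in Hs. destruct Hs as [Hc _].
  destruct (Hc [conj_list (map (fun i => signed (sigma i) (inst M k (pf_form (f i)) (a i))) (seq 0 n))])
    as [e He].
  - intros p [<-|[]]. right; auto.
  - exists e. intros i Hi. specialize (He _ (or_introl eq_refl)). rewrite sat_conj in He.
    apply He. apply in_map_iff. exists i. split; auto. apply in_seq; lia.
Qed.

Lemma Fam_from_inf (Delta : list (pformula M)) :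
  opD k (xeqx M k) Delta = omega -> exists psi, In psi Delta /\ forall N, Fam psi N.
Proof.
  intro HD. apply inf_pig; [apply Fam_mono|]. intro N.
  destruct (opD_unbounded _ HD (length Delta * N)) as [n [Hn Hinf]].
  destruct (opR_inf_inst Hinf) as [f [a [Hfa Hs]]].
  destruct (@pig _ f N Delta (seq 0 n)) as [psi [J [HpD [HJl [HJnd HJ]]]]].
  - apply seq_NoDup.
  - intros i Hi. apply in_seq in Hi. apply Hfa. lia.
  - rewrite length_seq. auto.
  - exists psi. split; auto. exists (map a J). split; [|split; [|split]].
    + apply NoDup_map_NoDup_ForallPairs; auto.
      intros x y Hx Hy Hxy. destruct (Nat.eq_dec x y) as [|Hne]; auto. exfalso.
      destruct (HJ x Hx) as [Hx1 Hfx]. destruct (HJ y Hy) as [Hy1 Hfy].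
      apply in_seq in Hx1. apply in_seq in Hy1.
      destruct (Hs (fun i => Nat.eqb i x)) as [e He].
      pose proof (He x ltac:(lia)) as E1. pose proof (He y ltac:(lia)) as E2.
      rewrite Nat.eqb_refl in E1. simpl in E1.
      destruct (Nat.eqb_spec y x); [congruence|]. simpl in E2.
      apply E2. rewrite Hfy, <- Hfx, <- Hxy. auto.
    + rewrite length_map; auto.
    + intros b Hb. apply in_map_iff in Hb. destruct Hb as [i [<- Hi]].
      destruct (HJ i Hi) as [Hi1 Hfi]. apply in_seq in Hi1. rewrite <- Hfi. apply Hfa. lia.
    + intro t. destruct (Hs (fun i => t (a i))) as [e He]. exists e.
      intros b Hb. apply in_map_iff in Hb. destruct Hb as [i [<- Hi]].
      destruct (HJ i Hi) as [Hi1 Hfi]. apply in_seq in Hi1. rewrite <- Hfi. apply He. lia.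
Qed.

End Bwd.


Lemma fin_collect (A : Type) n : forall (Q : Fin.t n -> list A -> Prop),
  (forall j P P', Q j P -> incl P P' -> Q j P') -> (forall j, exists P, Q j P) ->
  exists P, forall j, Q j P.
Proof.
  induction n; intros Q Hm H.
  - exists []. intro j. apply (Fin.case0 (fun j => Q j [])).
  - destruct (IHn (fun j => Q (Fin.FS j))) as [P1 HP1].
    + intros j P P' HQ Hi. eapply Hm; eauto.
    + intro j; apply H.
    + destruct (H Fin.F1) as [P0 HP0]. exists (P0 ++ P1). intro j.
      apply (Fin.caseS' j).
      * eapply Hm; eauto. apply incl_appl, incl_refl.
      * intro p. eapply Hm; eauto. apply incl_appr, incl_refl.
Qed.

Section Abs.
Variable L : signature.
Variable M : structure L.

Lemma tparams_exist (t : term L M) : exists P, tparams_in (fun m => In m P) t.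
Proof.
  induction t as [i|m|f args IH]; simpl.
  - exists []; auto.
  - exists [m]; left; auto.
  - apply fin_collect; auto. intros j P P' HQ Hi. eapply tparams_mono; eauto.
Qed.

Lemma fparams_exist (p : form L M) : exists P, fparams_in (fun m => In m P) p.
Proof.
  induction p; simpl.
  - exists []; auto.
  - destruct (tparams_exist t1) as [P1 H1]. destruct (tparams_exist t2) as [P2 H2].
    exists (P1 ++ P2). split; eapply tparams_mono; eauto; intros; apply in_or_app; auto.
  - apply fin_collect; [intros j P P' HQ Hi; eapply tparams_mono; eauto|].
    intro j. apply tparams_exist.
  - auto.
  - destruct IHp1 as [P1 H1]. destruct IHp2 as [P2 H2].
    exists (P1 ++ P2). split; eapply fparams_mono; eauto; intros; apply in_or_app; auto.
  - auto.
Qed.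

Fixpoint fbmax (p : form L M) : nat :=
  match p with
  | fNeg q => fbmax q
  | fAnd a b => max (fbmax a) (fbmax b)
  | fEx i q => max (S i) (fbmax q)
  | _ => 0
  end.

Variable P : list M.
Variable base : nat.

Fixpoint pos (m : M) (Q : list M) : nat :=
  match Q with
  | [] => 0
  | x :: Q' => if excluded_middle_informative (m = x) then 0 else S (pos m Q')
  end.

Lemma pos_spec m Q : In m Q -> nth_error Q (pos m Q) = Some m /\ pos m Q < length Q.
Proof.
  induction Q as [|x Q IH]; simpl; [intros []|].
  intros H. destruct (excluded_middle_informative (m = x)) as [->|Hne]; simpl.
  - split; auto; lia.
  - destruct H as [->|H]; [congruence|]. destruct (IH H). split; auto; lia.
Qed.

Fixpoint tabs (t : term L M) : term L M :=
  match t with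
  | tvar i => tvar i
  | tpar m => tvar (base + pos m P)
  | tapp f args => tapp f (fun j => tabs (args j))
  end.

Fixpoint fabs (p : form L M) : form L M :=
  match p with
  | fTop => fTop
  | fEq a b => fEq (tabs a) (tabs b)
  | fRel r args => fRel r (fun j => tabs (args j))
  | fNeg q => fNeg (fabs q)
  | fAnd a b => fAnd (fabs a) (fabs b)
  | fEx i q => fEx i (fabs q)
  end.

Lemma teval_tabs (t : term L M) e : tparams_in (fun m => In m P) t ->
  (forall m, In m P -> e (base + pos m P) = m) -> teval M e (tabs t) = teval M e t.
Proof.
  induction t as [i|m|f args IH]; simpl; intros Hp He; auto.
  f_equal. apply functional_extensionality. intro j. apply IH; auto.
Qed.

Lemma sat_fabs (p : form L M) : forall e, fparams_in (fun m => In m P) p -> fbmax p <= base ->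
  (forall m, In m P -> e (base + pos m P) = m) -> (sat M e (fabs p) <-> sat M e p).
Proof.
  induction p; intros e Hp Hb He; simpl in *.
  - tauto.
  - destruct Hp. rewrite !teval_tabs; auto. tauto.
  - replace (fun j => teval M e (tabs (args j))) with (fun j => teval M e (args j)). tauto.
    apply functional_extensionality; intro j. rewrite teval_tabs; auto.
  - rewrite IHp; auto. tauto.
  - destruct Hp. rewrite IHp1, IHp2; auto; try lia. tauto.
  - assert (Hib : i < base /\ fbmax p <= base) by (destruct (fbmax p); lia).
    assert (Hu : forall m, forall m', In m' P -> upd M e i m (base + pos m' P) = m').
    { intros m m' Hm'; unfold upd; destruct (Nat.eqb_spec (base + pos m' P) i); try lia; auto. }
    split; intros [m Hm]; exists m.
    + apply (IHp (upd M e i m) Hp ltac:(lia) (Hu m)); auto.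
    + apply (IHp (upd M e i m) Hp ltac:(lia) (Hu m)); auto.
Qed.

Lemma tfree_tabs (t : term L M) (B B' : nat -> Prop) : tfree_in B t -> tparams_in (fun m => In m P) t ->
  (forall j, B j -> B' j) -> (forall m, In m P -> B' (base + pos m P)) -> tfree_in B' (tabs t).
Proof. induction t as [i|m|f args IH]; simpl; intros; auto. Qed.

Lemma ffree_fabs (p : form L M) : forall (B B' : nat -> Prop), ffree_in B p ->
  fparams_in (fun m => In m P) p -> fbmax p <= base ->
  (forall j, B j -> B' j) -> (forall m, In m P -> B' (base + pos m P)) -> ffree_in B' (fabs p).
Proof.
  induction p; intros B B' Hf Hp Hb H1 H2; simpl in *.
  - auto.
  - destruct Hf, Hp; split; eapply tfree_tabs; eauto.
  - intro j; eapply tfree_tabs; eauto.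
  - eauto.
  - destruct Hf, Hp; split; [eapply IHp1|eapply IHp2]; eauto; lia.
  - assert (Hib : i < base /\ fbmax p <= base) by (destruct (fbmax p); lia).
    apply (IHp (fun j => j = i \/ B j)); [exact Hf|exact Hp|lia| |].
    + intros j [Hj|Hj]; auto.
    + intros m Hm. right. auto.
Qed.

Lemma nopar_fabs (p : form L M) : fparams_in (fun _ => False) (fabs p).
Proof.
  assert (Ht : forall t : term L M, tparams_in (fun _ => False) (tabs t)).
  { induction t; simpl; auto. }
  induction p; simpl; auto.
Qed.

End Abs.

Lemma bwd_main (L : signature) (M : structure L) (Hinh : inhabited M) k (psi : pformula M) :
  ffree_in (fun j => j < k + pf_ylen psi) (pf_form psi) -> (forall N, Fam k psi N) -> has_IP M.
Proof.
  intros Hfree HF. destruct Hinh as [d].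
  set (phi := pf_form psi) in *. set (l := pf_ylen psi) in *.
  destruct (fparams_exist M phi) as [P HP].
  set (L' := max l (fbmax M phi)). set (base := k + L').
  set (tail := repeat d (L' - l) ++ P).
  assert (Hkey : forall b e, length b = l ->
    (sat M e (inst M k (fabs M P base phi) (b ++ tail)) <-> sat M e (inst M k phi b))).
  { intros b e Hb. unfold inst. rewrite !sat_subst. rewrite sat_fabs; auto; [|lia|].
    - eapply sat_free; [exact Hfree|]. intros j Hj; cbv beta in Hj. unfold sube.
      destruct (Nat.leb_spec k j); auto.
      rewrite nth_error_app1 by lia. auto.
    - intros m Hm. unfold sube. destruct (Nat.leb_spec k (base + pos M m P)); [|lia].
      destruct (pos_spec M m P Hm) as [E1 E2].
      rewrite nth_error_app2 by lia. unfold tail. rewrite nth_error_app2 by (rewrite repeat_length; lia).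
      rewrite repeat_length. replace (base + pos M m P - k - length b - (L' - l)) with (pos M m P)
        by (unfold base; lia). rewrite E1. auto. }
  exists k, (L' + length P), (fabs M P base phi). split; [|split].
  - eapply ffree_fabs; eauto; [lia| |].
    + intros j Hj; cbv beta in *; lia.
    + intros m Hm. destruct (pos_spec M m P Hm). cbv beta. unfold base. lia.
  - apply nopar_fabs.
  - intro N. destruct (HF N) as [B [H1 [H2 [H3 H4]]]].
    exists (map (fun b => b ++ tail) B). split; [|split; [|split]].
    + apply NoDup_map_NoDup_ForallPairs; auto. intros x y _ _ H. eapply app_inv_tail; eauto.
    + rewrite length_map; auto.
    + intros b' Hb'. apply in_map_iff in Hb'. destruct Hb' as [b [<- Hb]].
      rewrite length_app. unfold tail. rewrite length_app, repeat_length.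
      rewrite (H3 b Hb). fold l. lia.
    + intro t. destruct (H4 (fun b => t (b ++ tail))) as [e He].
      intros lst Hl. exists e. intros p Hp. destruct (Hl p Hp) as [b' [Hb' ->]].
      apply in_map_iff in Hb'. destruct Hb' as [b [<- Hb]].
      specialize (He b Hb). apply sat_signed in He. apply sat_signed.
      rewrite Hkey by auto. auto.
Qed.


Unset Implicit Arguments.

Theorem proposition1p3 (L : signature) (M : structure L)
    (Hinh : inhabited M) (Hsat : omega_saturated M) :
  has_IP M <->
  exists (k : nat) (Delta : list (pformula M)),
    (forall phi, In phi Delta -> wf_pformula k phi) /\
    opD k (xeqx M k) Delta = omega.
Proof.
  split.
  - intros [k [l [phi [Hf [Hn HIP]]]]]. destruct Hinh as [d].
    exact (@fwd_main L M d k l phi Hf Hn Hsat HIP).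
  - intros [k [Delta [Hwf HD]]]. destruct (Fam_from_inf _ _ HD) as [psi [Hin HF]].
    apply (@bwd_main L M Hinh k psi); auto. apply Hwf; auto.
Qed.
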